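(* Let $n=p^2$ where $p$ is prime, and let $k\le\sqrt{n}$. Then the code $\mathcal{C}(r=p,p,S=\{0,1,\dots,k-1\})$ is a binary $k$-PIR code of dimension $n$ with redundancy $k\sqrt{n}$. In particular, for all $k\le\sqrt n$, $r_P(n,k)=\mathcal{O}(k\sqrt n)$.
   Context: Array construction: let $r,p$ be positive integers, $n=rp$, and $S=\{s_0<s_1<\dots<s_{k-1}\}\subseteq\{0,\dots,p-1\}$. For $s,t\in\{0,\dots,p-1\}$ let $D_{s,t}=\{(i,\langle t+is\rangle_p): i=0,\dots,r-1\}$, where $\langle x\rangle_p=x\bmod p$. An information vector $\boldsymbol{x}\in\{0,1\}^n$ is written as an array $(x_{i,j})_{(i,j)\in\{0,\dots,r-1\}\times\{0,\dots,p-1\}}$, and $kp$ redundancy bits are defined by $\rho_{\ell,t}=\sum_{(i,j)\in D_{s_\ell,t}}x_{i,j}\pmod 2$ for $\ell\in\{0,\dots,k-1\}$, $t\in\{0,\dots,p-1\}$. The binary code $\mathcal{C}(r,p,S)$ consists of all words $(\boldsymbol{x},(\rho_{\ell,t})_{\ell,t})$, of length $n+kp$. A binary $k$-PIR code of dimension $n$ and length $N$ is a binary linear code encoding $n$ information bits such that every information bit has $k$ mutually disjoint sets of coordinates from each of which it can be computed; its redundancy is $N-n$, and $r_P(n,k)$ is the minimum redundancy of a binary $k$-PIR code of dimension $n$. *)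

(* Defs.v *)
From mathcomp Require Import all_boot all_algebra.
From Stdlib Require Import ClassicalEpsilon.
Set Implicit Arguments. Unset Strict Implicit. Unset Printing Implicit Defensive.
Import GRing.Theory.
Local Open Scope ring_scope.

Definition Dset (r p s t : nat) : {set 'I_r * 'I_p} :=
  [set c : 'I_r * 'I_p | nat_of_ord c.2 == ((t + c.1 * s) %% p)%N].

(* The code C(r,p,S): S is given as the sequence [s_0; ...; s_{k-1}].
   Information coordinates are the array positions (i,j) ('I_r * 'I_p);
   redundancy coordinates are (l,t) ('I_(size S) * 'I_p). *)
Definition Cenc (r p : nat) (S : seq nat)
  (x : {ffun 'I_r * 'I_p -> 'F_2}) :
  {ffun ('I_r * 'I_p) + ('I_(size S) * 'I_p) -> 'F_2} :=
  [ffun c => match c with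
             | inl ij => x ij
             | inr (l, t) =>
                 \sum_(d in Dset r p (nth 0%N S (nat_of_ord (l : 'I_(size S))))
                                      (nat_of_ord (t : 'I_p))) x d
             end].

(* A binary k-PIR code, given by its (linear, injective) encoder from the
   information coordinates I to the codeword coordinates J.  Over F_2,
   additivity is the same as linearity. *)
Definition PIR_code (k : nat) (I J : finType)
  (enc : {ffun I -> 'F_2} -> {ffun J -> 'F_2}) : Prop :=
  (forall x y, enc (x + y) = enc x + enc y) /\
  injective enc /\
  forall i : I, exists R : 'I_k -> {set J},
    (forall a b : 'I_k, a != b -> [disjoint R a & R b]) /\
    (forall (a : 'I_k) (x y : {ffun I -> 'F_2}),
        (forall c, c \in R a -> enc x c = enc y c) -> x i = y i).

Definition has_PIR (n k m : nat) : Prop :=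
  exists (I J : finType) (enc : {ffun I -> 'F_2} -> {ffun J -> 'F_2}),
    #|I| = n /\ (n <= #|J|)%N /\ (#|J| - n)%N = m /\ PIR_code k enc.

Definition has_PIRb (n k m : nat) : bool :=
  if excluded_middle_informative (has_PIR n k m) then true else false.

(* r_P(n,k): the minimum redundancy of a binary k-PIR code of dimension n
   (such codes always exist, e.g. repetition codes; the fallback 0 is never
   used). *)
Definition rP (n k : nat) : nat :=
  match excluded_middle_informative (exists m, has_PIRb n k m) with
  | left ex => ex_minn ex
  | right _ => 0%N
  end.

(* Main.v *)
Require Import Defs.
From Stdlib Require Import ClassicalEpsilon.
From mathcomp Require Import all_boot all_algebra.
From mathcomp Require Import zify ring.
Import GRing.Theory.

Definition t0 (p i0 j0 a : nat) := ((j0 + p * p - i0 * a) %% p)%N.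

Lemma t0_lt p i0 j0 a : (0 < p)%N -> (t0 p i0 j0 a < p)%N.
Proof. by move=> h; rewrite ltn_mod. Qed.

Lemma base p i0 j0 a : (i0 < p)%N -> (a < p)%N ->
  (t0 p i0 j0 a + i0 * a = j0 %[mod p])%N.
Proof.
move=> hi ha; rewrite /t0 modnDml subnK; last first.
  by apply: leq_trans (leq_addl _ _); apply: leq_mul; apply: ltnW.
by rewrite addnC modnMDl.
Qed.

Lemma cong p i0 j0 a d1 d2 : (i0 < p)%N -> (a < p)%N ->
  d2 == ((t0 p i0 j0 a + d1 * a) %% p)%N ->
  (d2 + i0 * a = j0 + d1 * a %[mod p])%N.
Proof.
move=> hi ha /eqP ->; rewrite modnDml -addnA (addnC (d1 * a)) addnA.
by rewrite -modnDml base // modnDml.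
Qed.

Lemma memD p (i0 j0 : 'I_p) a : (a < p)%N ->
  (i0, j0) \in Dset p p a (t0 p i0 j0 a).
Proof. by move=> ha; rewrite inE /= base // modn_small. Qed.

Lemma neqi p (i0 j0 d1 d2 : 'I_p) a : (a < p)%N ->
  (d1, d2) \in Dset p p a (t0 p i0 j0 a) -> (d1, d2) != (i0, j0) ->
  (d1 : nat) != i0.
Proof.
move=> ha; rewrite inE /= => /(@cong _ _ _ _ _ _ (ltn_ord i0) ha) H; apply: contra => /eqP e.
have e' : d1 = i0 := val_inj e. subst d1.
rewrite xpair_eqE eqxx /=.
move/eqP: H; rewrite eqn_modDr !modn_small // => /eqP e2; apply/eqP; exact: val_inj.
Qed.
Lemma dist_bound (p x y : nat) : (x < p)%N -> (y < p)%N -> x != y -> (p %| `|(x:int) - y|)%N -> False.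
Proof.
move=> hx hy nxy /dvdn_leq.
case: (leqP x y) => h.
  rewrite distnEr //. 
  move=> H. have: (0 < y - x)%N by lia. move/H. lia.
rewrite distnEl; last exact: ltnW.
move=> H. have: (0 < x - y)%N by lia. move/H. lia.
Qed.

Lemma key (p i0 j0 d1 d2 a b : nat) : prime p -> (i0 < p)%N -> (d1 < p)%N ->
  (a < p)%N -> (b < p)%N -> d1 != i0 -> a != b ->
  d2 + i0 * a = j0 + d1 * a %[mod p] -> d2 + i0 * b = j0 + d1 * b %[mod p] -> False.
Proof.
move=> pp hi hd ha hb ndi nab H1 H2.
have Z1 : (p %| ((d2 + i0 * a)%:Z - (j0 + d1 * a)%:Z)%R)%Z.
  by rewrite -eqz_mod_dvd !modz_nat H1.
have Z2 : (p %| ((d2 + i0 * b)%:Z - (j0 + d1 * b)%:Z)%R)%Z.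
  by rewrite -eqz_mod_dvd !modz_nat H2.
have Z3 := rpredB Z1 Z2.
have E : ((d2 + i0 * a)%:Z - (j0 + d1 * a)%:Z - ((d2 + i0 * b)%:Z - (j0 + d1 * b)%:Z)
   = (i0%:Z - d1%:Z) * (a%:Z - b%:Z))%R.
  rewrite !PoszD !PoszM. ring.
rewrite E dvdzE abszM Euclid_dvdM // in Z3.
case/orP: Z3 => D.
  by apply: (@dist_bound p i0 d1) => //; rewrite eq_sym.
by apply: (@dist_bound p a b).
Qed.

Lemma pir p k (hp : prime p) (hk : (k <= p)%N) : PIR_code k (@Cenc p p (iota 0 k)).
Proof.
have p0 : (0 < p)%N by apply: prime_gt0.
split; [|split].
- by move=> x y; apply/ffunP => -[ij|[l t]]; rewrite !ffunE //= -big_split; apply: eq_bigr => d _; rewrite !ffunE.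
- by move=> x y /ffunP H; apply/ffunP => ij; have := H (inl ij); rewrite !ffunE.
move=> [i0 j0].
exists (fun a : 'I_k => [set c | match c with
   | inl d => (d \in Dset p p a (t0 p i0 j0 a)) && (d != (i0, j0))
   | inr lt => (val lt.1 == val a) && (val lt.2 == t0 p i0 j0 a) end]).
split.
- move=> a b nab; rewrite -setI_eq0; apply/eqP/setP => c; rewrite !inE.
  case: c => [[d1 d2]|[l t]]; apply/negP.
  + move=> /andP[/andP[Ha na] /andP[Hb _]].
    have ha : (a < p)%N by apply: leq_trans (ltn_ord a) hk.
    have hb : (b < p)%N by apply: leq_trans (ltn_ord b) hk.
    have nd := @neqi _ _ _ _ _ _ ha Ha na.
    move: Ha Hb; rewrite !inE /= => /(@cong _ _ _ _ _ _ (ltn_ord i0) ha) H1 /(@cong _ _ _ _ _ _ (ltn_ord i0) hb) H2.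
    by apply: (@key _ _ _ _ _ _ _ hp (ltn_ord i0) (ltn_ord d1) ha hb nd nab H1 H2).
  + move=> /andP[/andP[/eqP e1 _] /andP[/eqP e2 _]].
    by move/eqP: nab; apply; apply: val_inj; rewrite -e1 -e2.
move=> a x y H.
have ha : (a < p)%N by apply: leq_trans (ltn_ord a) hk.
have hla : (a < size (iota 0 k))%N by rewrite size_iota.
have := H (inr (Ordinal hla, Ordinal (@t0_lt p i0 j0 a p0))).
rewrite inE /= !eqxx /= => /(_ isT).
rewrite !ffunE /= nth_iota // add0n.
rewrite (bigD1 (F:=x) (i0, j0)) ?memD // (bigD1 (F:=y) (i0, j0)) ?memD //=.
move=> E; apply: (addIr (\sum_(i in Dset p p a (t0 p i0 j0 a) | i != (i0, j0)) x i)%R).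
rewrite [in RHS](eq_bigr y); first by rewrite E.
move=> d /andP[hd nd].
by move: (H (inl d)); rewrite !ffunE => HH; rewrite HH //; move: hd; rewrite !inE /= nd andbT.
Qed.

Theorem theorem8 (p k : nat) (hp : prime p) (hk : (k <= p)%N) :
  PIR_code k (@Cenc p p (iota 0 k)) /\
  #|{: 'I_p * 'I_p}| = (p ^ 2)%N /\
  (#|{: ('I_p * 'I_p) + ('I_(size (iota 0 k)) * 'I_p)}| - p ^ 2)%N = (k * p)%N /\
  (rP (p ^ 2) k <= k * p)%N.
Proof.
have c1 : #|{: 'I_p * 'I_p}| = (p ^ 2)%N by rewrite card_prod card_ord; lia.
have c2 : #|{: ('I_p * 'I_p) + ('I_(size (iota 0 k)) * 'I_p)}| = (p ^ 2 + k * p)%N.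
  by rewrite card_sum !card_prod !card_ord size_iota; lia.
have P := @pir p k hp hk.
have c3 : (#|{: ('I_p * 'I_p) + ('I_(size (iota 0 k)) * 'I_p)}| - p ^ 2)%N = (k * p)%N.
  by rewrite c2; lia.
split; first exact: P.
split; first exact: c1.
split; first exact: c3.
have HP : has_PIR (p ^ 2) k (k * p).
  exists ('I_p * 'I_p)%type, (('I_p * 'I_p) + ('I_(size (iota 0 k)) * 'I_p))%type.
  exists (@Cenc p p (iota 0 k)).
  by split; [exact: c1 | split; [rewrite c2 leq_addr | split; [exact: c3 | exact: P]]].
have Hb : has_PIRb (p ^ 2) k (k * p).
  by rewrite /has_PIRb; case: excluded_middle_informative.
rewrite /rP; case: excluded_middle_informative => [ex|nex]; last first.
  by exfalso; apply: nex; exists (k * p)%N.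
by case: ex_minnP => m _; apply.
Qed.
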